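(* Let $X$ be a finite connected poset with $|X|>2$. Then the group $\mathcal{P}(X)$ is isomorphic to $\mathrm{Aut}^\pm(X)$.
   Context: $\mathrm{Aut}(X)$ is the group of poset automorphisms of $X$, $\mathrm{Aut}^-(X)$ the set of anti-automorphisms (order-reversing bijections $X\to X$), and $\mathrm{Aut}^\pm(X)=\mathrm{Aut}(X)\cup\mathrm{Aut}^-(X)$, a group under composition. For $x<y$ in $X$, $e_{xy}$ denotes the incidence-algebra basis element (indicator of $(x,y)$), and $B=\{e_{xy}:x<y\}$. A bijection $\theta:B\to B$ is proper if there is $\lambda\in\mathrm{Aut}(X)$ with $\theta(e_{xy})=e_{\lambda(x)\lambda(y)}$ for all $x<y$, or $\lambda\in\mathrm{Aut}^-(X)$ with $\theta(e_{xy})=e_{\lambda(y)\lambda(x)}$ for all $x<y$; $\mathcal{P}(X)$ is the group of proper bijections of $B$. *)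

(* Defs.v *)
From mathcomp Require Import all_boot all_order all_fingroup.
Set Implicit Arguments. Unset Strict Implicit. Unset Printing Implicit Defensive.
Import Order.Theory.
Local Open Scope order_scope.

Section PosetDefs.
Context {d : Order.disp_t} {T : finPOrderType d}.

Definition poset_connected : Prop :=
  forall x y : T, connect (fun a b : T => a >=< b) x y.

Definition is_aut (f : {perm T}) : bool :=
  [forall x, forall y, (f x <= f y) == (x <= y)].
Definition is_antiaut (f : {perm T}) : bool :=
  [forall x, forall y, (f x <= f y) == (y <= x)].

Definition AutPM : {set {perm T}} := [set f | is_aut f || is_antiaut f].

(* B = { e_xy : x < y }, encoded as the pairs (x,y) with x < y. *)
Definition Bset := {p : T * T | p.1 < p.2}.

Definition proper_bij (th : {perm Bset}) : bool :=
  [exists l : {perm T},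
     (is_aut l && [forall b : Bset, val (th b) == (l (val b).1, l (val b).2)])
  || (is_antiaut l && [forall b : Bset, val (th b) == (l (val b).2, l (val b).1)])].

Definition PX : {set {perm Bset}} := [set th | proper_bij th].
End PosetDefs.

(* Main.v *)
Require Import Defs.
From mathcomp Require Import all_boot all_order all_fingroup.
Set Implicit Arguments. Unset Strict Implicit. Unset Printing Implicit Defensive.
Import Order.Theory.

Section Proof.
Context {d : Order.disp_t} {T : finPOrderType d}.
Local Notation B := (@Bset d T).
Local Open Scope order_scope.
Implicit Types l m : {perm T}.

Lemma autP l : is_aut l -> forall x y, (l x <= l y) = (x <= y).
Proof. by move=> /forallP H x y; apply/eqP; move: (H x) => /forallP/(_ y). Qed.

Lemma antiP l : is_antiaut l -> forall x y, (l x <= l y) = (y <= x).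
Proof. by move=> /forallP H x y; apply/eqP; move: (H x) => /forallP/(_ y). Qed.

Lemma autP_lt l : is_aut l -> forall x y, (l x < l y) = (x < y).
Proof. by move=> H x y; rewrite !lt_def (inj_eq perm_inj) autP. Qed.

Lemma antiP_lt l : is_antiaut l -> forall x y, (l x < l y) = (y < x).
Proof. by move=> H x y; rewrite !lt_def (inj_eq perm_inj) antiP // [y == x]eq_sym. Qed.

Definition pr l (p : T * T) : T * T :=
  if is_aut l then (l p.1, l p.2) else if is_antiaut l then (l p.2, l p.1) else p.

Lemma pr_lt l (b : B) : (pr l (val b)).1 < (pr l (val b)).2.
Proof.
rewrite /pr; case: ifP => [A|_]; first by rewrite /= autP_lt // (valP b).
case: ifP => [A|_]; first by rewrite /= antiP_lt // (valP b).
exact: (valP b).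
Qed.

Definition phif l (b : B) : B := Sub (pr l (val b)) (pr_lt l b).

Lemma val_phif l b : val (phif l b) = pr l (val b).
Proof. by rewrite /phif SubK. Qed.

Lemma pr_inj l : injective (pr l).
Proof.
move=> [a1 a2] [b1 b2]; rewrite /pr; case: ifP => _.
  by move=> [/perm_inj-> /perm_inj->].
case: ifP => _; last by [].
by move=> [/perm_inj-> /perm_inj->].
Qed.

Lemma phif_inj l : injective (phif l).
Proof. by move=> b c /(congr1 val); rewrite !val_phif => /pr_inj; apply: val_inj. Qed.

Definition phi l : {perm B} := perm (@phif_inj l).

Lemma val_phi l b : val (phi l b) = pr l (val b).
Proof. by rewrite permE val_phif. Qed.

Lemma closed_all (C : poset_connected (T := T)) (S : {set T}) :
  (forall a c, a \in S -> a >=< c -> c \in S) -> forall x z, x \in S -> z \in S.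
Proof.
move=> cl x z Sx; have := C x z; case/connectP => p.
elim: p x Sx => [|y p IH] x Sx /=; first by move=> _ ->.
move=> /andP[xy pth] zE; apply: (IH y _ pth zE); exact: cl Sx xy.
Qed.

Lemma card_le (S : {set T}) : (forall z, z \in S) -> (#|T| <= #|S|)%N.
Proof. by move=> H; rewrite -cardsT; apply: subset_leq_card; apply/subsetP => z _. Qed.

Lemma cmp_neq (a c : T) : a >=< c -> c != a -> (a < c) \/ (c < a).
Proof.
rewrite /Order.comparable => /orP[h|h] ne; [left|right];
  by rewrite lt_def h andbT // eq_sym.
Qed.

Lemma neighbor (C : poset_connected (T := T)) (H : (2 < #|T|)%N) (x : T) :
  exists2 y, y != x & x >=< y.
Proof.
case: (boolP [exists y : T, (y != x) && (x >=< y)]) => [/existsP[y /andP[]]|/existsPn N].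
  by exists y.
exfalso; have : (#|T| <= #|[set x]|)%N.
  apply: card_le => z; apply: (closed_all C _ (x := x)); last by rewrite inE.
  move=> a c; rewrite inE => /eqP-> xc; have := N c; rewrite xc andbT negbK => /eqP->.
  by rewrite inE.
by rewrite cards1 => /(leq_trans H).
Qed.

Lemma exists_lt (C : poset_connected (T := T)) (H : (2 < #|T|)%N) : exists x y : T, x < y.
Proof.
have /card_gt0P [x _] : (0 < #|T|)%N by apply: ltn_trans H.
have [y ne xy] := neighbor C H x.
by case: (cmp_neq xy ne) => h; [exists x, y | exists y, x].
Qed.

Lemma not_both (C : poset_connected (T := T)) (H : (2 < #|T|)%N) l :
  is_aut l -> is_antiaut l -> False.
Proof.
move=> A N; have [x [y xy]] := exists_lt C H.
have := autP_lt A x y; rewrite antiP_lt // xy => yx.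
by move: (lt_asym x y); rewrite xy yx.
Qed.

Lemma AutPM_group : group_set (AutPM (T := T)).
Proof.
apply/group_setP; split.
  rewrite inE; apply/orP; left; apply/forallP => x; apply/forallP => y.
  by rewrite !perm1.
move=> l m; rewrite !inE => /orP[] hl /orP[] hm; apply/orP;
  [left|right|right|left]; apply/forallP => x; apply/forallP => y; rewrite !permM;
  by rewrite ?(autP hm) ?(antiP hm) ?(autP hl) ?(antiP hl).
Qed.


Lemma mulAA l m : is_aut l -> is_aut m -> is_aut (l * m).
Proof. by move=> hl hm; apply/forallP => x; apply/forallP => y; rewrite !permM autP // autP. Qed.
Lemma mulAN l m : is_aut l -> is_antiaut m -> is_antiaut (l * m).
Proof. by move=> hl hm; apply/forallP => x; apply/forallP => y; rewrite !permM antiP // autP. Qed.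
Lemma mulNA l m : is_antiaut l -> is_aut m -> is_antiaut (l * m).
Proof. by move=> hl hm; apply/forallP => x; apply/forallP => y; rewrite !permM autP // antiP. Qed.
Lemma mulNN l m : is_antiaut l -> is_antiaut m -> is_aut (l * m).
Proof. by move=> hl hm; apply/forallP => x; apply/forallP => y; rewrite !permM antiP // antiP. Qed.

Lemma prA l p : is_aut l -> pr l p = (l p.1, l p.2).
Proof. by rewrite /pr => ->. Qed.

Lemma prN (C : poset_connected (T := T)) (H : (2 < #|T|)%N) l p :
  is_antiaut l -> pr l p = (l p.2, l p.1).
Proof. move=> N; rewrite /pr N; case: ifP => // A; case: (not_both C H A N). Qed.

Lemma pr_mul (C : poset_connected (T := T)) (H : (2 < #|T|)%N) l m p :
  l \in AutPM -> m \in AutPM -> pr (l * m) p = pr m (pr l p).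
Proof.
rewrite !inE => /orP[] hl /orP[] hm.
- by rewrite (prA _ (mulAA hl hm)) (prA _ hl) (prA _ hm) !permM.
- by rewrite (prN C H _ (mulAN hl hm)) (prA _ hl) (prN C H _ hm) !permM.
- by rewrite (prN C H _ (mulNA hl hm)) (prN C H _ hl) (prA _ hm) !permM.
- by rewrite (prA _ (mulNN hl hm)) (prN C H _ hl) (prN C H _ hm) !permM.
Qed.

Lemma kernel_triv (C : poset_connected (T := T)) (H : (2 < #|T|)%N) l :
  l \in AutPM -> phi l = 1%g -> l = 1%g.
Proof.
move=> Gl E; have E2 : forall x y : T, x < y -> pr l (x,y) = (x,y).
  move=> x y xy; have := val_phi l (Sub (x,y) xy : B).
  by rewrite E perm1 SubK => /esym.
case: (boolP (is_aut l)) => A.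
  apply/permP => x; rewrite perm1; have [y ne xy] := neighbor C H x.
  by case: (cmp_neq xy ne) => h; have := E2 _ _ h; rewrite prA //; case.
have N : is_antiaut l by move: Gl; rewrite inE (negbTE A).
have Ep : forall a c, a < c -> l a = c /\ l c = a.
  by move=> a c ac; have := E2 _ _ ac; rewrite (prN C H) //; case.
exfalso; have [x [y xy]] := exists_lt C H.
have [lx ly] := Ep _ _ xy.
have : (#|T| <= #|[set x; y]|)%N.
  apply: card_le => z; apply: (closed_all C _ (x := x)); last by rewrite !inE eqxx.
  move=> a c Sa ac; case: (eqVneq c a) => [->//|ne].
  have lac : l a = c by case: (cmp_neq ac ne) => h; have [] := Ep _ _ h.
  move: Sa; rewrite !inE -lac => /orP[]/eqP->; by rewrite ?lx ?ly eqxx ?orbT.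
by rewrite cards2 => /(leq_trans H); case: (x != y).
Qed.

End Proof.

Theorem proposition2p3 (d : Order.disp_t) (T : finPOrderType d) :
  poset_connected (T := T) -> 2 < #|T| ->
  (PX (T := T)) \isog (AutPM (T := T)).
Proof.
Local Open Scope group_scope.
move=> C H.
pose G := Group (AutPM_group (T:=T)).
have phiM : {in G &, {morph (@phi d T) : x y / (x * y)%g}}.
  move=> l m Gl Gm; apply/permP => b; apply: val_inj.
  by rewrite permM !val_phi (pr_mul C H).
pose f := Morphism phiM.
have imf : f @* G = PX.
  rewrite morphimEdom; apply/setP => th; apply/imsetP/idP.
    case=> l Gl ->; rewrite inE; apply/existsP; exists l.
    move: Gl; rewrite inE => /orP[A|N]; apply/orP; [left|right];
      rewrite ?A ?N /=; apply/forallP => b; apply/eqP; have := val_phi l b.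
      by rewrite (prA _ A).
    by rewrite (prN C H _ N).
  rewrite inE => /existsP [l /orP[/andP[A /forallP E]|/andP[N /forallP E]]];
    exists l; rewrite ?inE ?A ?N ?orbT //; apply/permP => b; apply: val_inj;
    rewrite /= val_phi.
    by rewrite (prA _ A); exact/eqP/E.
  by rewrite (prN C H _ N); exact/eqP/E.
have injf : 'injm f.
  apply/injmP => l m Gl Gm E; apply/eqP; rewrite eq_mulgV1; apply/eqP.
  apply: (kernel_triv C H).
    by change (l * m^-1 \in G); rewrite groupM ?groupV.
  have e1 : f (l * m^-1) = f l * f m^-1 := morphM f Gl (groupVr Gm).
  by rewrite morphV // E mulgV in e1.
have iso : isom G (f @* G)%G f by apply/isomP.
have := isog_symr (isom_isog f (subxx G) iso).
by rewrite /= imf.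
Qed.
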